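(* Fix an input $X=[x_1,\dots,x_T]$ with $\|x_t\|_2\le R_x$ and an initial state $h_0\in[-1,1]^{\hat D}$. Let $\theta=(W,U)$ and $\theta+\delta=(W+\delta_W,U+\delta_U)$, and let $h_T=h_T(\theta)$, $h_T'=h_T(\theta+\delta)$ be the FastRNN final states on $X$ with $\beta=1-\alpha$. Then $$\|h_T'-h_T\|_2\le \alpha\big(\sqrt{\hat D}\|\delta_U\|_2+R_x\|\delta_W\|_2\big)\sum_{j=0}^{T-1}(\alpha\|U\|_2+\beta)^j,$$ and if moreover $\alpha\le \frac{1}{T\,|\|U\|_2-1|}$, then $$\|h_T'-h_T\|_2\le 2\alpha T\big(\sqrt{\hat D}\|\delta_U\|_2+R_x\|\delta_W\|_2\big).$$
   Context: FastRNN recursion: $h_t=\alpha\,\sigma(Wx_t+Uh_{t-1})+\beta h_{t-1}$ with $W\in\mathbb R^{\hat D\times D}$, $U\in\mathbb R^{\hat D\times\hat D}$, $0\le\alpha,\beta\le1$, and $\sigma$ a coordinatewise $1$-Lipschitz nonlinearity taking values in $[-1,1]$. Norms on matrices are spectral norms. *)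

(* Defs.v *)
From Stdlib Require Import Reals Lra ClassicalEpsilon.
Open Scope R_scope.

Fixpoint fsum (n : nat) (f : nat -> R) : R :=
  match n with
  | O => 0
  | S k => fsum k f + f k
  end.

(* Vectors of R^n are functions nat -> R (only coordinates 0..n-1 matter);
   m x n matrices are functions nat -> nat -> R (row, column). *)
Definition vec := nat -> R.
Definition mat := nat -> nat -> R.

Definition vnorm (n : nat) (v : vec) : R := sqrt (fsum n (fun i => v i ^ 2)).

Definition mv (n : nat) (A : mat) (x : vec) : vec :=
  fun i => fsum n (fun j => A i j * x j).

Definition vadd (u v : vec) : vec := fun i => u i + v i.
Definition madd (A B : mat) : mat := fun i j => A i j + B i j.

Definition spec_norm (m n : nat) (A : mat) : R :=
  epsilon (inhabits 0)
    (is_lub (fun r => exists x : vec, vnorm n x <= 1 /\ r = vnorm m (mv n A x))).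

Fixpoint fastrnn (D Dh : nat) (sigma : R -> R) (alpha beta : R)
    (W U : mat) (X : nat -> vec) (h0 : vec) (t : nat) : vec :=
  match t with
  | O => h0
  | S k =>
      let h := fastrnn D Dh sigma alpha beta W U X h0 k in
      fun i => alpha * sigma (mv D W (X (S k)) i + mv Dh U h i) + beta * h i
  end.

(* Main.v *)
Require Import Defs.
From Stdlib Require Import Reals Lra Psatz ClassicalEpsilon.
Open Scope R_scope.

Lemma fsum_ext n f g : (forall i, (i < n)%nat -> f i = g i) -> fsum n f = fsum n g.
Proof. induction n; intros H; simpl; [reflexivity|]. rewrite IHn by (intros; apply H; lia).
  rewrite H by lia; reflexivity. Qed.

Lemma fsum_le n f g : (forall i, (i < n)%nat -> f i <= g i) -> fsum n f <= fsum n g.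
Proof. induction n; intros H; simpl; [lra|]. assert (H1 := H n ltac:(lia)).
  assert (fsum n f <= fsum n g) by (apply IHn; intros; apply H; lia). lra. Qed.

Lemma fsum_nonneg n f : (forall i, (i < n)%nat -> 0 <= f i) -> 0 <= fsum n f.
Proof. intros H. replace 0 with (fsum n (fun _ => 0)). apply fsum_le; auto.
  induction n; simpl; [reflexivity| rewrite IHn; [ring| intros; apply H; lia]]. Qed.

Lemma fsum_plus n f g : fsum n (fun j => f j + g j) = fsum n f + fsum n g.
Proof. induction n; simpl; [ring| rewrite IHn; ring]. Qed.

Lemma fsum_sub n f g : fsum n f - fsum n g = fsum n (fun j => f j - g j).
Proof. induction n; simpl; [ring| rewrite <- IHn; ring]. Qed.

Lemma fsum_scal n c f : fsum n (fun j => c * f j) = c * fsum n f.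
Proof. induction n; simpl; [ring| rewrite IHn; ring]. Qed.

Lemma fsum_const n c : fsum n (fun _ => c) = INR n * c.
Proof. induction n; simpl fsum; [simpl; ring| rewrite IHn, S_INR; ring]. Qed.

Lemma fsum_geom q k : fsum (S k) (fun j => q ^ j) = 1 + q * fsum k (fun j => q ^ j).
Proof. induction k. simpl; ring. change (fsum (S (S k)) (fun j => q ^ j)) with
  (fsum (S k) (fun j => q ^ j) + q ^ (S k)). rewrite IHk at 1. change (fsum (S k) (fun j => q ^ j)) with (fsum k (fun j => q ^ j) + q ^ k). simpl pow. ring. Qed.

Lemma fsum_lin n a : fsum n (fun j => 1 + 2 * a * INR j) = INR n + a * INR n * (INR n - 1).
Proof. induction n. simpl; ring. simpl fsum. rewrite IHn, S_INR. ring. Qed.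

Lemma CS n u v : (fsum n (fun i => u i * v i))^2 <=
   fsum n (fun i => u i ^ 2) * fsum n (fun i => v i ^ 2).
Proof.
  set (A := fsum n (fun i => u i ^ 2)). set (B := fsum n (fun i => u i * v i)).
  set (C := fsum n (fun i => v i ^ 2)).
  assert (key : forall t, 0 <= t^2 * A + 2 * t * B + C).
  { intros t. assert (E : fsum n (fun i => (t * u i + v i)^2) = t^2 * A + 2 * t * B + C).
    { unfold A, B, C. clear. induction n; [simpl; ring|]. cbn [fsum]. rewrite IHn; ring. }
    rewrite <- E. apply fsum_nonneg. intros; apply pow2_ge_0. }
  assert (HA : 0 <= A) by (apply fsum_nonneg; intros; apply pow2_ge_0).
  destruct (Rle_lt_or_eq_dec 0 A HA) as [Ap|A0].
  - specialize (key (- B / A)).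
    replace ((- B / A)^2 * A + 2 * (- B / A) * B + C) with (C - B^2 / A) in key by (field; lra).
    assert (B ^ 2 / A <= C) by lra.
    apply Rmult_le_compat_l with (r := A) in H; [|lra].
    replace (A * (B^2 / A)) with (B^2) in H by (field; lra). lra.
  - rewrite <- A0. destruct (Req_dec B 0) as [B0|B0].
    + rewrite B0. simpl; lra.
    + specialize (key (- (C + 1) / (2 * B))). rewrite <- A0 in key.
      replace ((- (C + 1) / (2 * B)) ^ 2 * 0 + 2 * (- (C + 1) / (2 * B)) * B + C) with (-1) in key
        by (field; auto). lra.
Qed.

Lemma vnorm_nonneg n v : 0 <= vnorm n v.
Proof. apply sqrt_pos. Qed.

Lemma vnorm_ext n u v : (forall i, (i < n)%nat -> u i = v i) -> vnorm n u = vnorm n v.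
Proof. intros H; unfold vnorm; f_equal; apply fsum_ext; intros; rewrite H; auto. Qed.

Lemma vnorm_scal n c v : vnorm n (fun i => c * v i) = Rabs c * vnorm n v.
Proof. unfold vnorm.
  rewrite (fsum_ext n _ (fun i => c^2 * v i ^ 2)) by (intros; ring).
  rewrite fsum_scal, sqrt_mult_alt by apply pow2_ge_0.
  rewrite <- pow2_abs, sqrt_pow2 by apply Rabs_pos. reflexivity. Qed.

Lemma vnorm_mono n u v : (forall i, (i < n)%nat -> Rabs (u i) <= Rabs (v i)) ->
  vnorm n u <= vnorm n v.
Proof. intros H; unfold vnorm; apply sqrt_le_1_alt, fsum_le; intros i Hi.
  rewrite <- (pow2_abs (u i)), <- (pow2_abs (v i)). apply pow_incr. split; [apply Rabs_pos| auto]. Qed.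

Lemma vnorm_tri n u v : vnorm n (fun i => u i + v i) <= vnorm n u + vnorm n v.
Proof.
  unfold vnorm.
  set (A := fsum n (fun i => u i ^ 2)). set (B := fsum n (fun i => u i * v i)).
  set (C := fsum n (fun i => v i ^ 2)).
  assert (E : fsum n (fun i => (u i + v i)^2) = A + 2 * B + C).
  { unfold A, B, C. clear. induction n; [simpl; ring|]. cbn [fsum]. rewrite IHn; ring. }
  rewrite E.
  assert (HA : 0 <= A) by (apply fsum_nonneg; intros; apply pow2_ge_0).
  assert (HC : 0 <= C) by (apply fsum_nonneg; intros; apply pow2_ge_0).
  assert (HB : B <= sqrt A * sqrt C).
  { destruct (Rle_or_lt B 0). { assert (0 <= sqrt A * sqrt C) by (apply Rmult_le_pos; apply sqrt_pos). lra. }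
    rewrite <- (sqrt_pow2 B) by lra. rewrite <- sqrt_mult_alt by auto.
    apply sqrt_le_1_alt. apply CS. }
  rewrite <- (sqrt_pow2 (sqrt A + sqrt C)) by (apply Rplus_le_le_0_compat; apply sqrt_pos).
  apply sqrt_le_1_alt.
  replace ((sqrt A + sqrt C)^2) with (sqrt A * sqrt A + sqrt C * sqrt C + 2 * (sqrt A * sqrt C)) by ring.
  rewrite !sqrt_sqrt by auto. lra.
Qed.

Lemma mv_sub n A x y i : mv n A y i - mv n A x i = mv n A (fun j => y j - x j) i.
Proof. unfold mv. rewrite fsum_sub. apply fsum_ext; intros; ring. Qed.

Lemma mv_madd n A B x i : mv n (madd A B) x i = mv n A x i + mv n B x i.
Proof. unfold mv, madd. rewrite <- fsum_plus. apply fsum_ext; intros; ring. Qed.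

Lemma mv_scal n A c x i : mv n A (fun j => c * x j) i = c * mv n A x i.
Proof. unfold mv. rewrite <- fsum_scal. apply fsum_ext; intros; ring. Qed.

Definition frob m n (A : mat) := sqrt (fsum m (fun i => fsum n (fun j => A i j ^ 2))).

Lemma frob_bound m n A x : vnorm m (mv n A x) <= frob m n A * vnorm n x.
Proof.
  unfold vnorm, frob. rewrite <- sqrt_mult_alt by (apply fsum_nonneg; intros; apply fsum_nonneg; intros; apply pow2_ge_0).
  apply sqrt_le_1_alt. rewrite Rmult_comm, <- fsum_scal. apply fsum_le; intros i Hi.
  unfold mv. rewrite Rmult_comm. apply CS.
Qed.

Lemma spec_lub m n A : is_lub (fun r => exists x : vec, vnorm n x <= 1 /\ r = vnorm m (mv n A x)) (spec_norm m n A).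
Proof.
  unfold spec_norm. apply epsilon_spec.
  destruct (completeness (fun r => exists x : vec, vnorm n x <= 1 /\ r = vnorm m (mv n A x))) as [l Hl].
  - exists (frob m n A). intros r [x [Hx ->]].
    eapply Rle_trans; [apply frob_bound|]. assert (0 <= frob m n A) by apply sqrt_pos.
    rewrite <- (Rmult_1_r (frob m n A)) at 2. apply Rmult_le_compat_l; auto.
  - exists (vnorm m (mv n A (fun _ => 0))). exists (fun _ => 0). split; auto.
    unfold vnorm. rewrite fsum_const. replace (INR n * 0 ^ 2) with 0 by ring. rewrite sqrt_0; lra.
  - exists l; auto.
Qed.

Lemma spec_nonneg m n A : 0 <= spec_norm m n A.
Proof. destruct (spec_lub m n A) as [H _]. eapply Rle_trans; [|apply H].
  apply vnorm_nonneg. exists (fun _ => 0). split; auto.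
  unfold vnorm. rewrite fsum_const. replace (INR n * 0 ^ 2) with 0 by ring. rewrite sqrt_0; lra. Qed.

Lemma spec_bound m n A x : vnorm m (mv n A x) <= spec_norm m n A * vnorm n x.
Proof.
  destruct (Rle_lt_or_eq_dec 0 _ (vnorm_nonneg n x)) as [Hp|H0].
  - set (r := vnorm n x) in *.
    destruct (spec_lub m n A) as [H _].
    assert (Hy : vnorm m (mv n A (fun j => / r * x j)) <= spec_norm m n A).
    { apply H. eexists; split; [|reflexivity]. rewrite vnorm_scal. fold r.
      rewrite Rabs_right by (left; apply Rinv_0_lt_compat; auto). rewrite Rinv_l; lra. }
    rewrite (vnorm_ext m _ (fun i => / r * mv n A x i)) in Hy by (intros; apply mv_scal).
    rewrite vnorm_scal, Rabs_right in Hy by (left; apply Rinv_0_lt_compat; auto).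
    apply Rmult_le_compat_l with (r := r) in Hy; [|lra].
    rewrite <- Rmult_assoc, Rinv_r in Hy by lra. lra.
  - rewrite <- H0. assert (Hf := frob_bound m n A x). rewrite <- H0 in Hf. lra.
Qed.

Lemma fastrnn_S D Dh sigma alpha beta W U X h0 k i :
  fastrnn D Dh sigma alpha beta W U X h0 (S k) i =
  alpha * sigma (mv D W (X (S k)) i + mv Dh U (fastrnn D Dh sigma alpha beta W U X h0 k) i)
  + beta * fastrnn D Dh sigma alpha beta W U X h0 k i.
Proof. reflexivity. Qed.

Lemma fastrnn_box D Dh sigma alpha W U X h0 :
  (forall a, -1 <= sigma a <= 1) -> 0 <= alpha <= 1 ->
  (forall i, (i < Dh)%nat -> -1 <= h0 i <= 1) ->
  forall k i, (i < Dh)%nat -> -1 <= fastrnn D Dh sigma alpha (1 - alpha) W U X h0 k i <= 1.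
Proof.
  intros Hs Ha Hh k; induction k; intros i Hi; [apply Hh; auto|].
  rewrite fastrnn_S. specialize (IHk i Hi).
  set (s := sigma _). assert (-1 <= s <= 1) by apply Hs.
  set (h := fastrnn _ _ _ _ _ _ _ _ _ _ _) in *. nra.
Qed.

Lemma pow_bound a : 0 <= a -> forall j, a * INR j <= 1 -> (1 + a)^j <= 1 + a * INR j + (a * INR j)^2.
Proof.
  intros Ha j; induction j; intros Hj. simpl; lra.
  rewrite S_INR in *. assert (Hj' : a * INR j <= 1) by nra.
  specialize (IHj Hj'). assert (0 <= INR j) by apply pos_INR.
  assert (0 <= a * INR j) by nra.
  simpl pow. simpl pow in IHj.
  apply Rle_trans with ((1 + a) * (1 + a * INR j + a * INR j * (a * INR j * 1))).
  - apply Rmult_le_compat_l; lra.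
  - nra.
Qed.

Theorem mainTheorem4
  (D Dh T : nat) (sigma : R -> R)
  (Hsig_lip : forall a b, Rabs (sigma a - sigma b) <= Rabs (a - b))
  (Hsig_rng : forall a, -1 <= sigma a <= 1)
  (alpha beta : R) (Halpha : 0 <= alpha <= 1) (Hbeta : beta = 1 - alpha)
  (W U dW dU : mat) (X : nat -> vec) (Rx : R)
  (HX : forall t, (1 <= t <= T)%nat -> vnorm D (X t) <= Rx)
  (h0 : vec) (Hh0 : forall i, (i < Dh)%nat -> -1 <= h0 i <= 1) :
  let hT := fastrnn D Dh sigma alpha beta W U X h0 T in
  let hT' := fastrnn D Dh sigma alpha beta (madd W dW) (madd U dU) X h0 T in
  let nU := spec_norm Dh Dh U in
  let C := sqrt (INR Dh) * spec_norm Dh Dh dU + Rx * spec_norm Dh D dW in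
  vnorm Dh (fun i => hT' i - hT i)
    <= alpha * C * fsum T (fun j => (alpha * nU + beta) ^ j)
  /\
  (alpha * INR T * Rabs (nU - 1) <= 1 ->
   vnorm Dh (fun i => hT' i - hT i) <= 2 * alpha * INR T * C).
Proof.
  intros hT hT' nU C. subst beta.
  set (q := alpha * nU + (1 - alpha)).
  assert (HnU : 0 <= nU) by apply spec_nonneg.
  assert (Hq : 0 <= q) by (unfold q; nra).
  set (h := fun k => fastrnn D Dh sigma alpha (1 - alpha) W U X h0 k).
  set (h' := fun k => fastrnn D Dh sigma alpha (1 - alpha) (madd W dW) (madd U dU) X h0 k).
  set (e := fun k => vnorm Dh (fun i => h' k i - h k i)).
  assert (step : forall k, (k < T)%nat -> e (S k) <= alpha * C + q * e k).
  { intros k Hk. unfold e.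
    set (d := fun i => h' k i - h k i).
    set (x := X (S k)).
    set (p := fun i => mv D W x i + mv Dh U (h k) i).
    set (p' := fun i => mv D (madd W dW) x i + mv Dh (madd U dU) (h' k) i).
    rewrite (vnorm_ext Dh _ (fun i => alpha * (sigma (p' i) - sigma (p i)) + (1 - alpha) * d i))
      by (intros i Hi; unfold d, p, p', x, h, h'; cbv beta; rewrite !fastrnn_S; ring).
    eapply Rle_trans; [apply vnorm_tri|].
    rewrite !vnorm_scal, (Rabs_right alpha), (Rabs_right (1 - alpha)) by lra.
    assert (Hs : vnorm Dh (fun i => sigma (p' i) - sigma (p i)) <= C + nU * vnorm Dh d).
    { eapply Rle_trans. apply (vnorm_mono Dh _ (fun i => p' i - p i)). intros; apply Hsig_lip.
      rewrite (vnorm_ext Dh _ (fun i => (mv D dW x i + mv Dh dU (h' k) i) + mv Dh U d i)).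
      2:{ intros i Hi. unfold p, p', d. rewrite !mv_madd.
          rewrite <- (mv_sub Dh U (h k) (h' k)). ring. }
      eapply Rle_trans; [apply vnorm_tri|].
      apply Rplus_le_compat; [| apply spec_bound].
      eapply Rle_trans; [apply vnorm_tri|]. unfold C. rewrite (Rplus_comm (sqrt _ * _)), (Rmult_comm Rx), (Rmult_comm (sqrt _)).
      apply Rplus_le_compat.
      - eapply Rle_trans; [apply spec_bound|].
        apply Rmult_le_compat_l; [apply spec_nonneg|]. apply HX; lia.
      - eapply Rle_trans; [apply spec_bound|].
        apply Rmult_le_compat_l; [apply spec_nonneg|].
        unfold vnorm. apply sqrt_le_1_alt.
        rewrite <- (Rmult_1_r (INR Dh)), <- fsum_const. apply fsum_le. intros i Hi.
        assert (B := fastrnn_box D Dh sigma alpha (madd W dW) (madd U dU) X h0 Hsig_rng Halpha Hh0 k i Hi).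
        unfold h'. nra. }
    fold d. unfold q.
    assert (0 <= vnorm Dh d) by apply vnorm_nonneg.
    apply Rmult_le_compat_l with (r := alpha) in Hs; [|lra]. nra. }
  assert (main : forall k, (k <= T)%nat -> e k <= alpha * C * fsum k (fun j => q ^ j)).
  { induction k; intros Hk.
    - unfold e, h, h'; simpl. unfold vnorm. rewrite (fsum_ext _ _ (fun _ => 0)) by (intros; simpl; ring).
      rewrite fsum_const, Rmult_0_r, sqrt_0. lra.
    - eapply Rle_trans; [apply step; lia|]. rewrite fsum_geom.
      specialize (IHk ltac:(lia)).
      apply Rmult_le_compat_l with (r := q) in IHk; auto. nra. }
  assert (P1 := main T (le_n T)). change (vnorm Dh (fun i => hT' i - hT i)) with (e T).
  split; [exact P1|].
  intros Hcond.
  destruct T as [|T'].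
  { simpl in P1. simpl. lra. }
  assert (HRx : 0 <= Rx) by (eapply Rle_trans; [apply vnorm_nonneg| apply (HX 1%nat); lia]).
  assert (HC : 0 <= C) by (unfold C; apply Rplus_le_le_0_compat; apply Rmult_le_pos;
     auto using sqrt_pos, spec_nonneg).
  set (n := S T') in *.
  set (a := alpha * Rabs (nU - 1)).
  assert (Ha : 0 <= a) by (unfold a; apply Rmult_le_pos; [lra| apply Rabs_pos]).
  assert (HaT : a * INR n <= 1) by (unfold a; lra).
  assert (Hsum : fsum n (fun j => q ^ j) <= 2 * INR n).
  { apply Rle_trans with (fsum n (fun j => 1 + 2 * a * INR j)).
    - apply fsum_le. intros j Hj.
      assert (Hjn : INR j <= INR n) by (apply le_INR; lia).
      assert (0 <= INR j) by apply pos_INR.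
      assert (Haj : a * INR j <= 1) by nra.
      apply Rle_trans with ((1 + a) ^ j).
      + apply pow_incr. split; auto. unfold q, a.
        assert (nU - 1 <= Rabs (nU - 1)) by apply Rle_abs. nra.
      + eapply Rle_trans; [apply pow_bound; auto|]. assert (0 <= a * INR j) by (apply Rmult_le_pos; lra). simpl pow. nra.
    - rewrite fsum_lin. assert (0 <= INR n) by apply pos_INR. nra. }
  apply Rle_trans with (alpha * C * (2 * INR n)).
  - eapply Rle_trans; [exact P1|]. apply Rmult_le_compat_l; auto. apply Rmult_le_pos; lra.
  - lra.
Qed.
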